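(* Let $G$ and $H$ be ordered graphs, each with at least $3$ vertices and each with $m$ edges. Suppose $G$ is $3$-connected, $H$ has no isolated vertices, and $M_{1,G}=M_{1,H}$. Then there is a bijection $\sigma$ from the vertices of $G$ to the vertices of $H$ such that for every $k$, if the $k$-th edge of $G$ is $\{i,j\}$ then the $k$-th edge of $H$ is $\{\sigma(i),\sigma(j)\}$.
   Context: An ordered graph is a finite vertex set with an ordered sequence $(E_1,\dots,E_m)$ of distinct unordered pairs of distinct vertices. For a configuration $\mathbf p$ assigning a number $\mathbf p_i\in\mathbb C$ to each vertex, $m_G(\mathbf p)\in\mathbb C^m$ has $k$-th coordinate $(\mathbf p_i-\mathbf p_j)^2$ with $E_k=\{i,j\}$. $M_{1,G}\subseteq\mathbb C^m$ is the Zariski closure of the image of $m_G$ over all such configurations. *)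

(* Defs.v *)
From HB Require Import structures.
From mathcomp Require Import all_boot all_order all_algebra.
Set Implicit Arguments. Unset Strict Implicit. Unset Printing Implicit Defensive.
Import Order.TTheory GRing.Theory Num.Theory.
Local Open Scope ring_scope.

Record ordgraph (V : finType) (m : nat) := OrdGraph {
  edge : 'I_m -> V * V;
  edge_loopless : forall k, (edge k).1 != (edge k).2;
  edge_distinct : forall k l : 'I_m, k != l ->
    [set (edge k).1; (edge k).2] != [set (edge l).1; (edge l).2]
}.

Definition edge_set (V : finType) (m : nat) (G : ordgraph V m) (k : 'I_m)
  : {set V} := [set (edge G k).1; (edge G k).2].

Definition adj (V : finType) (m : nat) (G : ordgraph V m) : rel V :=
  fun x y => [exists k : 'I_m, (edge G k == (x, y)) || (edge G k == (y, x))].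

Definition adj_minus (V : finType) (m : nat) (G : ordgraph V m) (S : {set V})
  : rel V := fun x y => [&& adj G x y, x \notin S & y \notin S].

Definition connected_minus (V : finType) (m : nat) (G : ordgraph V m)
  (S : {set V}) : Prop :=
  forall x y : V, x \notin S -> y \notin S -> connect (adj_minus G S) x y.

(* 3-connected: removing any set of fewer than 3 vertices leaves a connected
   graph (the vertex count hypothesis is stated separately). *)
Definition three_connected (V : finType) (m : nat) (G : ordgraph V m) : Prop :=
  forall S : {set V}, (#|S| < 3)%N -> connected_minus G S.

Definition no_isolated (V : finType) (m : nat) (G : ordgraph V m) : Prop :=
  forall v : V, exists k : 'I_m, v \in edge_set G k.

Definition meas (C : numClosedFieldType) (V : finType) (m : nat)
  (G : ordgraph V m) (p : V -> C) : 'I_m -> C :=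
  fun k => (p (edge G k).1 - p (edge G k).2) ^+ 2.

(* polynomials in m variables over C: finite lists of (coefficient, exponent
   vector) terms, and their evaluation *)
Definition mpoly (C : numClosedFieldType) (m : nat) := seq (C * ('I_m -> nat)).

Definition mpeval (C : numClosedFieldType) (m : nat) (P : mpoly C m)
  (x : 'I_m -> C) : C :=
  \sum_(t <- P) t.1 * \prod_(i < m) x i ^+ t.2 i.

Definition zariski_closure (C : numClosedFieldType) (m : nat)
  (S : ('I_m -> C) -> Prop) : ('I_m -> C) -> Prop :=
  fun x => forall P : mpoly C m, (forall y, S y -> mpeval P y = 0) ->
    mpeval P x = 0.

Definition M1 (C : numClosedFieldType) (V : finType) (m : nat)
  (G : ordgraph V m) : ('I_m -> C) -> Prop :=
  zariski_closure (fun y => exists p : V -> C, y = meas G p).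

(* Main.v *)
Require Import Defs.
From HB Require Import structures.
From mathcomp Require Import all_boot all_order all_algebra.
From mathcomp Require Import ring zify.
Set Implicit Arguments. Unset Strict Implicit. Unset Printing Implicit Defensive.
Import Order.TTheory GRing.Theory Num.Theory.

Section Poly.
Open Scope ring_scope.
Variable C : numClosedFieldType.
Variable m : nat.

Definition Rep (f : ('I_m -> C) -> C) := exists P : mpoly C m, forall x, mpeval P x = f x.

Lemma mpeval_ext (P : mpoly C m) x y : x =1 y -> mpeval P x = mpeval P y.
Proof. by move=> e; apply: eq_bigr => t _; congr (_ * _); apply: eq_bigr => i _; rewrite e. Qed.

Lemma Rep_const c : Rep (fun _ => c).
Proof.
exists [:: (c, fun _ => 0%N)] => x; rewrite /mpeval big_seq1 /=.
by rewrite big1 ?mulr1 // => i _; rewrite expr0.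
Qed.

Lemma Rep_var k : Rep (fun x => x k).
Proof.
exists [:: (1, fun i => nat_of_bool (i == k))] => x; rewrite /mpeval big_seq1 /= mul1r.
rewrite (bigD1 k) //= eqxx expr1 big1 ?mulr1 // => i /negbTE -> ; by rewrite expr0.
Qed.

Lemma Rep_add f g : Rep f -> Rep g -> Rep (fun x => f x + g x).
Proof.
move=> [P hP] [Q hQ]; exists (P ++ Q) => x; by rewrite /mpeval big_cat /= -!/(mpeval _ _) hP hQ.
Qed.

Lemma Rep_mul f g : Rep f -> Rep g -> Rep (fun x => f x * g x).
Proof.
move=> [P hP] [Q hQ].
exists [seq (a.1 * b.1, fun i => (a.2 i + b.2 i)%N) | a <- P, b <- Q] => x.
rewrite -hP -hQ /mpeval big_allpairs_dep /= mulr_suml; apply: eq_bigr => a _.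
rewrite mulr_sumr; apply: eq_bigr => b _ /=.
rewrite (eq_bigr (fun i => x i ^+ a.2 i * x i ^+ b.2 i)); last by move=> i _; rewrite exprD.
rewrite big_split /=; ring.
Qed.

Inductive RT : (C -> ('I_m -> C) -> C) -> Prop :=
| RTc f : Rep f -> RT (fun _ x => f x)
| RTT : RT (fun T _ => T)
| RTadd g h : RT g -> RT h -> RT (fun T x => g T x + h T x)
| RTmul g h : RT g -> RT h -> RT (fun T x => g T x * h T x)
| RText g h : RT g -> (forall T x, g T x = h T x) -> RT h.

Lemma RT_eval g T0 : RT g -> Rep (fun x => g T0 x).
Proof.
elim=> {g}.
- by [].
- exact: Rep_const.
- by move=> g h _ Hg _ Hh; apply: Rep_add.
- by move=> g h _ Hg _ Hh; apply: Rep_mul.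
- by move=> g h _ [P hP] e; exists P => x; rewrite hP e.
Qed.

Lemma RT_cst c : RT (fun _ _ => c).
Proof. by apply: (RTc (Rep_const c)). Qed.

Lemma RT_var k : RT (fun _ x => x k).
Proof. by apply: (RTc (Rep_var k)). Qed.

Lemma RT_shift k g : RT g -> exists a b, RT a /\ RT b /\
  forall x t T, t ^+ 2 = x k ->
    g (T + t) x = a T x + t * b T x /\ g (T - t) x = a T x - t * b T x.
Proof.
elim=> {g}.
- move=> f hf; exists (fun _ x => f x), (fun _ _ => 0); split; first exact: RTc.
  split; first exact: RT_cst.
  by move=> x t T _; rewrite mulr0 addr0 subr0.
- exists (fun T _ => T), (fun _ _ => 1); split; first exact: RTT.
  split; first exact: RT_cst.
  by move=> x t T _; rewrite mulr1.
- move=> g h _ [a1 [b1 [ha1 [hb1 e1]]]] _ [a2 [b2 [ha2 [hb2 e2]]]].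
  exists (fun T x => a1 T x + a2 T x), (fun T x => b1 T x + b2 T x).
  split; first exact: RTadd. split; first exact: RTadd.
  move=> x t T ht; have [-> ->] := e1 x t T ht; have [-> ->] := e2 x t T ht.
  split; ring.
- move=> g h _ [a1 [b1 [ha1 [hb1 e1]]]] _ [a2 [b2 [ha2 [hb2 e2]]]].
  exists (fun T x => a1 T x * a2 T x + x k * (b1 T x * b2 T x)),
         (fun T x => a1 T x * b2 T x + b1 T x * a2 T x).
  split; first by apply: RTadd; [apply: RTmul|apply: RTmul; [apply: RT_var|apply: RTmul]].
  split; first by apply: RTadd; apply: RTmul.
  move=> x t T ht; have [-> ->] := e1 x t T ht; have [-> ->] := e2 x t T ht.
  rewrite -ht; split; ring.
- move=> g h _ [a [b [ha [hb e]]]] eq; exists a, b; split=> //; split=> //.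
  by move=> x t T ht; rewrite -!eq; apply: e.
Qed.

Fixpoint F (T : C) (ts : seq C) : C :=
  match ts with [::] => T | t :: ts' => F (T + t) ts' * F (T - t) ts' end.

Lemma F_rep (ks : seq 'I_m) : exists g, RT g /\ forall x ts T,
  all2 (fun t k => t ^+ 2 == x k) ts ks -> g T x = F T ts.
Proof.
elim: ks => [|k ks [g [hg eg]]].
  by exists (fun T _ => T); split; [exact: RTT| move=> x [|t ts] T].
have [a [b [ha [hb e]]]] := RT_shift k hg.
exists (fun T x => a T x * a T x - x k * (b T x * b T x)); split.
  apply: RTadd; first exact: RTmul.
  apply: (RText (g := fun T x => (-1) * (x k * (b T x * b T x)))); last by move=> *; ring.
  by apply: RTmul; [apply: RT_cst | apply: RTmul; [apply: RT_var | apply: RTmul]].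
move=> x [//|t ts] T /= /andP[/eqP ht hts].
rewrite -(eg x ts (T+t) hts) -(eg x ts (T-t) hts); have [-> ->] := e x t T ht; rewrite -ht; ring.
Qed.

Lemma F_zero ts T : T + \sum_(t <- ts) t = 0 -> F T ts = 0.
Proof.
elim: ts T => [|t ts IH] T /=; first by rewrite big_nil addr0.
by rewrite big_cons => h; rewrite IH ?mul0r // -addrA.
Qed.

Lemma F_nonzero (bs : seq bool) (T : C) (z : int) :
  T + (count id bs)%:R = (2 * z + 1)%:~R -> F T [seq (nat_of_bool b)%:R | b <- bs] != 0.
Proof.
elim: bs T z => [|b bs IH] T z /=.
  rewrite addr0 => ->; rewrite intr_eq0; apply/eqP; lia.
move=> h; apply: mulf_neq0.
  apply: (IH _ z); rewrite -h natrD; ring.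
apply: (IH _ (z - b%:Z)).
have -> : (2*(z - b%:Z)+1) = (2*z+1) - 2 * b%:Z by ring.
rewrite intrB intrM -h natrD.
have -> : (2 : int)%:~R = 2 :> C by [].
have -> : (b%:Z)%:~R = (nat_of_bool b)%:R :> C by [].
ring.
Qed.

End Poly.
Section Walks.
Open Scope ring_scope.
Variable C : numClosedFieldType.
Variable V : finType.
Variable m : nat.
Variable G : ordgraph V m.

Fixpoint wk (u w : V) (ks : seq 'I_m) : bool :=
  match ks with
  | [::] => u == w
  | k :: ks' => ((edge G k).1 == u) && wk (edge G k).2 w ks'
             || ((edge G k).2 == u) && wk (edge G k).1 w ks'
  end.

Lemma wk_cat u v w ks1 ks2 : wk u v ks1 -> wk v w ks2 -> wk u w (ks1 ++ ks2).
Proof.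
elim: ks1 u => [|k ks IH] u /=; first by move=> /eqP ->.
case/orP=> /andP[e h] h2; by rewrite e (IH _ h h2) ?orbT.
Qed.

Lemma wk_rev u w ks : wk u w ks -> wk w u (rev ks).
Proof.
elim: ks u => [|k ks IH] u; first by rewrite /= eq_sym.
rewrite rev_cons -cats1 /=; case/orP=> /andP[/eqP e h]; apply: wk_cat (IH _ h) _ => /=;
  by rewrite e !eqxx ?orbT.
Qed.

Lemma adj_sym : symmetric (adj G).
Proof.
move=> x y; apply/existsP/existsP => [][k hk]; exists k; by rewrite orbC.
Qed.

Lemma wk_connect x y : connect (adj G) x y -> exists ks, wk x y ks.
Proof.
case/connectP=> p; elim: p x => [|z p IH] x /=; first by move=> _ ->; exists [::]; rewrite /= eqxx.
case/andP=> /existsP[k hk] hp hy; have [ks hks] := IH z hp hy.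
exists (k :: ks) => /=.
by case/orP: hk => /eqP -> /=; rewrite eqxx hks ?orbT.
Qed.

Lemma wk_meas u w ks (p : V -> C) : wk u w ks -> exists ts,
  all2 (fun t k => t ^+ 2 == meas G p k) ts ks /\ \sum_(t <- ts) t = p u - p w.
Proof.
elim: ks u => [|k ks IH] u /=.
  by move=> /eqP ->; exists [::]; rewrite big_nil subrr.
case/orP=> /andP[/eqP e h].
  have [ts [h1 h2]] := IH _ h; exists ((p u - p (edge G k).2) :: ts).
  rewrite /= h1 big_cons h2 /meas e andbT; split; last by ring.
  by apply/eqP; ring.
have [ts [h1 h2]] := IH _ h; exists ((p u - p (edge G k).1) :: ts).
rewrite /= h1 big_cons h2 /meas e andbT; split; last by ring.
by apply/eqP; ring.
Qed.

Definition ind (D : {set 'I_m}) : 'I_m -> C := fun k => (nat_of_bool (k \in D))%:R.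

Lemma even_walks (D : {set 'I_m}) : M1 G (ind D) ->
  forall r ks, wk r r ks -> ~~ odd (count (mem D) ks).
Proof.
move=> hM r ks hw; apply/negP => hodd.
have [g [hg eg]] := F_rep C ks.
have [P hP] := RT_eval 0 hg.
have h0 : mpeval P (ind D) = 0.
  apply: hM => y [p ->]; rewrite hP.
  have [ts [h1 h2]] := wk_meas p hw.
  by rewrite (eg _ ts) // F_zero // h2 subrr add0r.
move: h0; rewrite hP (eg _ [seq (nat_of_bool b)%:R | b <- [seq k \in D | k <- ks]]).
  apply/eqP; apply: (F_nonzero (z := (count (mem D) ks)./2%:Z)).
  rewrite add0r count_map.
  rewrite -{1}(odd_double_half (count (mem D) ks)) hodd.
  set n := (count (mem D) ks)./2.
  rewrite intrD intrM natrD -muln2 natrM.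
  have -> : (2 : int)%:~R = 2 :> C by [].
  have -> : (n%:Z)%:~R = n%:R :> C by [].
  rewrite /= -/(1 : C); ring.
clear -D; elim: ks => //= k ks ->; rewrite andbT /ind.
by case: (k \in D); rewrite /= ?expr1n ?expr0n.
Qed.

Definition cutset (Y : {set V}) : {set 'I_m} :=
  [set k | ((edge G k).1 \in Y) != ((edge G k).2 \in Y)].

Lemma cut_in_M1 (Y : {set V}) : M1 G (ind (cutset Y)).
Proof.
move=> P hP; set p : V -> C := fun v => (nat_of_bool (v \in Y))%:R.
rewrite (@mpeval_ext _ _ P _ (meas G p)); first by apply: hP; exists p.
move=> k; rewrite /ind /meas /p /cutset inE.
by case: ((edge G k).1 \in Y); case: ((edge G k).2 \in Y); rewrite /= ?subrr ?expr0n //= ?sub0r ?subr0 ?sqrrN expr1n.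
Qed.

Lemma cut_of_even (D : {set 'I_m}) :
  (forall r ks, wk r r ks -> ~~ odd (count (mem D) ks)) -> exists X : {set V}, D = cutset X.
Proof.
move=> hev.
have csym : connect_sym (adj G) := sym_connect_sym adj_sym.
have exP : forall x, exists ks, wk (fingraph.root (adj G) x) x ks.
  by move=> x; apply: wk_connect; rewrite csym fingraph.connect_root.
pose pick x := xchoose (exP x).
have hpick : forall x, wk (fingraph.root (adj G) x) x (pick x) by move=> x; apply: xchooseP.
exists [set x | odd (count (mem D) (pick x))]; apply/setP => k.
rewrite /cutset !inE.
set a := (edge G k).1; set b := (edge G k).2.
have hab : connect (adj G) a b.
  by apply: connect1; apply/existsP; exists k; rewrite /a /b -surjective_pairing eqxx.
have rab : fingraph.root (adj G) a = fingraph.root (adj G) b := fingraph.rootP csym hab.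
have hk : wk a b [:: k] by rewrite /= eqxx /= eqxx.
have hw : wk (fingraph.root (adj G) a) (fingraph.root (adj G) a) (pick a ++ [:: k] ++ rev (pick b)).
  apply: wk_cat (hpick a) _; apply: wk_cat hk _; rewrite rab; exact: wk_rev.
move: (hev _ _ hw); rewrite !count_cat count_rev !oddD /=.
by case: (k \in D); case: (odd (count (mem D) (pick a))); case: (odd (count (mem D) (pick b))).
Qed.

End Walks.
Section Comb.
Variable V : finType.
Variable m : nat.
Variable G : ordgraph V m.

Definition star (v : V) : {set 'I_m} := [set k | v \in edge_set G k].

Lemma edge_setE k z : (z \in edge_set G k) = (z == (edge G k).1) || (z == (edge G k).2).
Proof. by rewrite /edge_set !inE. Qed.

Lemma other k x : x \in edge_set G k -> exists y, [/\ y != x,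
  forall Y, (k \in cutset G Y) = ((x \in Y) != (y \in Y)) &
  forall z, (z \in edge_set G k) = (z == x) || (z == y)].
Proof.
have hl := edge_loopless G k.
rewrite edge_setE; case/orP => /eqP ->.
  exists (edge G k).2; split; first by rewrite eq_sym.
    by move=> Y; rewrite inE.
  by move=> z; rewrite edge_setE.
exists (edge G k).1; split => //.
  by move=> Y; rewrite inE; case: (_ \in Y); case: (_ \in Y).
by move=> z; rewrite edge_setE orbC.
Qed.

Lemma adj_minus_edge S x y : adj_minus G S x y -> [/\ x \notin S, y \notin S &
  exists k, [/\ x \in edge_set G k, forall Y, (k \in cutset G Y) = ((x \in Y) != (y \in Y)) &
    forall z, (z \in edge_set G k) = (z == x) || (z == y)]].
Proof.
case/and3P => /existsP[k hk] hx hy; split=> //; exists k.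
case/orP: hk => /eqP e; rewrite /cutset /edge_set e /=; split.
- by rewrite !inE eqxx.
- by move=> Y; rewrite inE e.
- by move=> z; rewrite !inE.
- by rewrite !inE eqxx orbT.
- by move=> Y; rewrite inE e /=; case: (_ \in Y); case: (_ \in Y).
- by move=> z; rewrite !inE orbC.
Qed.

Lemma conn_const (e : rel V) (f : V -> bool) x y :
  connect e x y -> (forall a b, e a b -> f a = f b) -> f x = f y.
Proof.
move=> /connectP[p hp ->] hf; elim: p x hp => [|z p IH] x //=.
by case/andP=> exz hp; rewrite (hf _ _ exz) IH.
Qed.

Lemma first_step (e : rel V) x y : x != y -> connect e x y -> exists z, e x z.
Proof.
move=> nxy /connectP[[|z p] hp hy]; first by rewrite hy eqxx in nxy.
by exists z; case/andP: hp.
Qed.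

Lemma path_meet (e : rel V) (P Q : pred V) x p : path e x p -> P x -> Q (last x p) ->
  (forall a b, e a b -> (P a && P b) || (Q a && Q b)) -> exists z, P z && Q z.
Proof.
move=> hp Px Ql he; elim: p x hp Px Ql => [|y p IH] x /=.
  by move=> _ Px Qx; exists x; rewrite Px Qx.
case/andP=> exy hp Px Ql; case/orP: (he _ _ exy) => /andP[Pa Pb].
  exact: IH hp Pb Ql.
by exists x; rewrite Px Pa.
Qed.

Lemma third (a b : V) : (3 <= #|V|)%N -> exists c, (c != a) && (c != b).
Proof.
move=> h; case: (pickP [pred c | (c != a) && (c != b)]) => [c hc|h0]; first by exists c.
have : [set: V] \subset [set a; b].
  by apply/subsetP => c _; rewrite !inE; move: (h0 c) => /= /negbT; rewrite negb_and !negbK.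
move/subset_leq_card; rewrite cardsT cards2 => h2.
by have := leq_trans h h2; case: (a != b).
Qed.

Lemma star_cut v : star v = cutset G [set v].
Proof.
apply/setP => k; rewrite /star /cutset /edge_set !inE.
have := edge_loopless G k.
case: (edge G k) => a b /=.
case: (v =P a) => [<-|na]; case: (v =P b) => [<-|nb] //=; rewrite ?eqxx //.
- by move=> _; have -> : (b == v) = false by apply/eqP => e; apply: nb.
- by move/negbTE ->.
- move=> _; have -> : (b == v) = false by apply/eqP => e; apply: nb.
  by have -> : (a == v) = false by apply/eqP => e; apply: na.
Qed.

Lemma star_min (h3 : three_connected G) v (Y : {set V}) :
  cutset G Y \subset star v -> cutset G Y != set0 -> cutset G Y = star v.
Proof.
move=> hsub /set0Pn[k0 hk0].
have hc : connected_minus G [set v] by apply: h3; rewrite cards1.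
have hk0s := subsetP hsub _ hk0; rewrite /star inE in hk0s.
have [o [nov hcut _]] := other hk0s.
have hvY : (v \in Y) != (o \in Y) by rewrite -hcut.
have hconst : forall x, x != v -> (x \in Y) = (o \in Y).
  move=> x nxv; apply: (conn_const (e := adj_minus G [set v]) (f := fun z => z \in Y)).
    by apply: hc; rewrite inE; [exact: nxv | exact: nov].
  move=> a b hab; have [ha hb [k [hak hcutk hesk]]] := adj_minus_edge hab.
  rewrite !inE in ha hb.
  have nks : k \notin star v.
    by rewrite /star inE hesk eq_sym (negbTE ha) eq_sym (negbTE hb).
  have : k \notin cutset G Y by apply: contra nks; apply: (subsetP hsub).
  by rewrite hcutk negbK => /eqP.
apply/setP => k; rewrite [k \in star v]inE.
case: (boolP (v \in edge_set G k)) => hv.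
  by have [y [nyv hcutk _]] := other hv; rewrite hcutk (hconst y nyv).
apply/negbTE; rewrite /cutset inE negbK; rewrite edge_setE negb_or in hv.
case/andP: hv => h1 h2; rewrite eq_sym in h1; rewrite eq_sym in h2.
by rewrite (hconst _ h1) (hconst _ h2).
Qed.

Lemma has_edge (h3 : three_connected G) : (3 <= #|V|)%N -> forall v, exists k, k \in star v.
Proof.
move=> hV v; have [c /andP[ncv _]] := third v v hV.
have hc : connected_minus G set0 by apply: h3; rewrite cards0.
have nvc : v != c by rewrite eq_sym.
have v0 : v \notin set0 by rewrite inE.
have c0 : c \notin set0 by rewrite inE.
have [z hz] := first_step nvc (hc v c v0 c0).
have [_ _ [k [hvk _ _]]] := adj_minus_edge hz.
by exists k; rewrite /star inE.
Qed.

Lemma private_edge (h3 : three_connected G) : (3 <= #|V|)%N -> forall a b, a != b ->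
  exists k, (k \in star a) && (k \notin star b).
Proof.
move=> hV a b nab; have [c /andP[nca ncb]] := third a b hV.
have hc : connected_minus G [set b] by apply: h3; rewrite cards1.
have hab : a \notin [set b] by rewrite inE.
have hcb : c \notin [set b] by rewrite inE.
have nac : a != c by rewrite eq_sym.
have [z hz] := first_step nac (hc _ _ hab hcb).
have [_ hzb [k [hak _ hes]]] := adj_minus_edge hz.
exists k; rewrite [k \in star a]inE [k \in star b]inE hak /= hes; rewrite inE in hzb.
by rewrite negb_or ![b == _]eq_sym nab hzb.
Qed.

End Comb.
Lemma cutsetC (V : finType) m (G : ordgraph V m) (X : {set V}) : cutset G (~: X) = cutset G X.
Proof. by apply/setP => k; rewrite !inE; case: (_ \in X); case: (_ \in X). Qed.

Section Main.
Variables (VG VH : finType) (m : nat) (G : ordgraph VG m) (H : ordgraph VH m).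
Hypothesis h3 : three_connected G.
Hypothesis hVG : (3 <= #|VG|)%N.
Hypothesis trGH : forall Y : {set VG}, exists X : {set VH}, cutset G Y = cutset H X.
Hypothesis trHG : forall X : {set VH}, exists Y : {set VG}, cutset H X = cutset G Y.

Lemma case1 v (X : {set VH}) : star G v = cutset H X ->
  (forall k, k \notin star G v -> (edge H k).1 \notin X) -> exists w, star H w = star G v.
Proof.
move=> hX hout.
have [k0 hk0] := has_edge h3 hVG v.
suff hw : forall w, w \in X -> k0 \in star H w -> exists w, star H w = star G v.
  have h2 := hk0; rewrite hX inE in h2; move: h2.
  case: (boolP ((edge H k0).1 \in X)) => h1 /= h2.
    by apply: (hw _ h1); rewrite inE edge_setE eqxx.
  rewrite negbK in h2.
  by apply: (hw _ h2); rewrite inE edge_setE eqxx orbT.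
move=> w hwX hk0w; exists w.
have [Y hY] := trHG [set w]; rewrite star_cut hY.
apply: star_min => //.
  apply/subsetP => k; rewrite -hY -star_cut inE => hwk.
  apply/negPn/negP => hks.
  have h1 := hout _ hks.
  have : k \notin cutset H X by rewrite -hX.
  rewrite inE negbK (negbTE h1) => /eqP h2; symmetry in h2.
  move: hwk; rewrite edge_setE; case/orP => /eqP e.
    by rewrite -e hwX in h1.
  by rewrite -e hwX in h2.
by apply/set0Pn; exists k0; rewrite -hY -star_cut.
Qed.

Lemma star_match v : exists w, star H w = star G v.
Proof.
have [X hX] := trGH [set v]; rewrite -star_cut in hX.
have hsame : forall k, k \notin star G v -> ((edge H k).1 \in X) = ((edge H k).2 \in X).
  by move=> k; rewrite hX inE negbK => /eqP.
case: (boolP [exists k, (k \notin star G v) && ((edge H k).1 \in X)]) => [hA | nA]; last first.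
  apply: (case1 hX) => k hk; apply/negP => hx; apply: (negP nA); apply/existsP; exists k.
  by rewrite hk hx.
case: (boolP [exists k, (k \notin star G v) && ((edge H k).1 \notin X)]) => [hB | nB]; last first.
  apply: (case1 (X := ~: X)); first by rewrite cutsetC.
  move=> k hk; rewrite inE negbK; apply/negPn/negP => hx; apply: (negP nB); apply/existsP.
  by exists k; rewrite hk hx.
exfalso.
case/existsP: hA => kA /andP[kAD kAX].
case/existsP: hB => kB /andP[kBD kBX].
have notv : forall k x, k \notin star G v -> x \in edge_set G k -> x \notin [set v].
  move=> k x hk hx; rewrite inE; apply/negP => /eqP e; move: hk; rewrite inE -e hx //.
pose PA x := [exists k, [&& k \notin star G v, (edge H k).1 \in X & x \in edge_set G k]].
pose PB x := [exists k, [&& k \notin star G v, (edge H k).1 \notin X & x \in edge_set G k]].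
have hc : connected_minus G [set v] by apply: h3; rewrite cards1.
have ha1 : (edge G kA).1 \in edge_set G kA by rewrite edge_setE eqxx.
have hb1 : (edge G kB).1 \in edge_set G kB by rewrite edge_setE eqxx.
have /connectP[p hp hl] := hc _ _ (notv _ _ kAD ha1) (notv _ _ kBD hb1).
have [u /andP[/existsP[kA' /and3P[kAD' kAX' huA]] /existsP[kB' /and3P[kBD' kBX' huB]]]] :
    exists u, PA u && PB u.
  apply: (path_meet hp).
  - by apply/existsP; exists kA; rewrite kAD kAX ha1.
  - by rewrite -hl; apply/existsP; exists kB; rewrite kBD kBX hb1.
  move=> a b hab; have [ha hb [k [hak _ hes]]] := adj_minus_edge hab.
  rewrite !inE in ha hb.
  have hk : k \notin star G v by rewrite inE hes negb_or ![v == _]eq_sym ha hb.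
  have hbk : b \in edge_set G k by rewrite hes eqxx orbT.
  case: (boolP ((edge H k).1 \in X)) => hkX.
    by apply/orP; left; apply/andP; split; apply/existsP; exists k; rewrite hk hkX ?hak ?hbk.
  by apply/orP; right; apply/andP; split; apply/existsP; exists k; rewrite hk hkX ?hak ?hbk.
have [Z hZ] := trGH [set u]; rewrite -star_cut in hZ.
have [Y1 hY1] := trHG (Z :&: X).
have hc2 : connected_minus G [set u; v] by apply: h3; rewrite cards2; case: (u != v).
have hstep : forall x y, adj_minus G [set u; v] x y -> (x \in Y1) = (y \in Y1).
  move=> x y hxy; have [hx hy [k [hxk hcut hes]]] := adj_minus_edge hxy.
  rewrite !inE !negb_or in hx hy; case/andP: hx => hxu hxv; case/andP: hy => hyu hyv.
  have hkv : k \notin star G v by rewrite inE hes negb_or ![v == _]eq_sym hxv hyv.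
  have hku : k \notin star G u by rewrite inE hes negb_or ![u == _]eq_sym hxu hyu.
  have : k \notin cutset G Y1.
    rewrite -hY1 inE !inE -(hsame _ hkv).
    case: ((edge H k).1 \in X); rewrite ?andbT ?andbF //.
    by move: hku; rewrite hZ inE.
  by rewrite hcut negbK => /eqP.
have [a [nau hcutA hesA]] := other huA.
have [b [nbu hcutB hesB]] := other huB.
have haout : a \notin [set u; v].
  rewrite !inE negb_or nau /=; apply/negP => /eqP e.
  by move: kAD'; rewrite inE hesA e eqxx orbT.
have hbout : b \notin [set u; v].
  rewrite !inE negb_or nbu /=; apply/negP => /eqP e.
  by move: kBD'; rewrite inE hesB e eqxx orbT.
have hab := conn_const (hc2 _ _ haout hbout) hstep.
have hA1 : kA' \in cutset G Y1.
  rewrite -hY1 inE !inE -(hsame _ kAD') kAX' !andbT.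
  have : kA' \in star G u by rewrite inE.
  by rewrite hZ inE.
have hB1 : kB' \notin cutset G Y1.
  by rewrite -hY1 inE !inE -(hsame _ kBD') (negbTE kBX') !andbF.
move: hA1 hB1; rewrite hcutA hcutB -hab.
by case: (u \in Y1); case: (a \in Y1).
Qed.

End Main.

Theorem mainTheorem5 (C : numClosedFieldType) (VG VH : finType) (m : nat)
  (G : ordgraph VG m) (H : ordgraph VH m) :
  (3 <= #|VG|)%N -> (3 <= #|VH|)%N ->
  three_connected G -> no_isolated H ->
  (forall x : 'I_m -> C, M1 G x <-> M1 H x) ->
  exists sigma : VG -> VH, bijective sigma /\
    forall k : 'I_m,
      edge_set H k = [set sigma (edge G k).1; sigma (edge G k).2].
Proof.
move=> hVG hVH h3 hiso hM.
have trGH : forall Y : {set VG}, exists X : {set VH}, cutset G Y = cutset H X.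
  move=> Y; apply: cut_of_even; apply: (@even_walks C); apply/hM; exact: cut_in_M1.
have trHG : forall X : {set VH}, exists Y : {set VG}, cutset H X = cutset G Y.
  move=> X; apply: cut_of_even; apply: (@even_walks C); apply/hM; exact: cut_in_M1.
have hsm : forall v, exists w, star H w == star G v.
  by move=> v; have [w hw] := star_match h3 hVG trGH trHG v; exists w; rewrite hw.
pose sigma v := xchoose (hsm v).
have hs : forall v, star H (sigma v) = star G v by move=> v; apply/eqP/(xchooseP (hsm v)).
have hinj : injective sigma.
  move=> u v e; apply/eqP; apply/negPn/negP => nuv.
  have [k /andP[hku hkv]] := private_edge h3 hVG nuv.
  by move: hkv; rewrite -hs -e hs hku.
have hedge : forall k, edge_set H k = [set sigma (edge G k).1; sigma (edge G k).2].
  move=> k; set a := (edge G k).1; set b := (edge G k).2.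
  have nab : a != b := edge_loopless G k.
  have hsa : sigma a \in edge_set H k.
    have : k \in star H (sigma a) by rewrite hs inE edge_setE eqxx.
    by rewrite inE.
  have hsb : sigma b \in edge_set H k.
    have : k \in star H (sigma b) by rewrite hs inE edge_setE eqxx orbT.
    by rewrite inE.
  have nsab : sigma a != sigma b by apply: contra nab => /eqP /hinj ->.
  move: nsab; rewrite edge_setE in hsa; rewrite edge_setE in hsb.
  rewrite /edge_set; case/orP: hsa => /eqP ->; case/orP: hsb => /eqP -> //; rewrite ?eqxx //.
  by rewrite setUC.
have hsurj : forall w, exists v, sigma v == w.
  move=> w; have [k hk] := hiso w; rewrite hedge !inE in hk.
  by case/orP: hk => /eqP ->; [exists (edge G k).1 | exists (edge G k).2].
exists sigma; split => //.
exists (fun w => xchoose (hsurj w)).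
  by move=> v; apply: hinj; apply/eqP; exact: (xchooseP (hsurj (sigma v))).
by move=> w; apply/eqP; exact: (xchooseP (hsurj w)).
Qed.
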